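(* Let $D$ be an integral domain and let $\Theta$ be a Jaffard family of $D$. Then there is an exact sequence $$0\longrightarrow\mathrm{Pic}(D,\Theta)\longrightarrow\mathrm{Pic}(D)\longrightarrow\bigoplus_{T\in\Theta}\mathrm{Pic}(T)\longrightarrow 0,$$ where the first map is the inclusion and the second is $[I]\mapsto([IT])_{T\in\Theta}$.
   Context: $K$ is the quotient field of $D$; for a domain $A$, $\mathrm{Pic}(A)$ is the group of invertible fractional ideals modulo principal ones. $\mathrm{Pic}(D,\Theta)=\{[I]\in\mathrm{Pic}(D)\mid IT\text{ principal for all }T\in\Theta\}$. An overring is a ring between $D$ and $K$, flat if flat as a $D$-module. A pre-Jaffard family of $D$ is a set $\Theta$ of overrings with: $\Theta=\{K\}$ or $K\notin\Theta$; all members flat; complete (every ideal $I$ of $D$ equals $\bigcap_{T\in\Theta}IT$); independent ($TT'=K$ for distinct members); compact in the Zariski topology on overrings (subbasic opens $\{T\mid x_1,\dots,x_n\in T\}$). A Jaffard family is a pre-Jaffard family that is locally finite (each nonzero $x\in D$ is a nonunit in only finitely many members). *)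

(* Defs.v *)
From Stdlib Require List.
From HB Require Import structures.
From mathcomp Require Import all_boot all_order all_algebra.
Set Implicit Arguments. Unset Strict Implicit. Unset Printing Implicit Defensive.
Import Order.TTheory GRing.Theory.
Local Open Scope ring_scope.

Section Defs.
Variable K : fieldType.

Definition subring (A : K -> Prop) : Prop :=
  A 0 /\ A 1 /\ (forall x y, A x -> A y -> A (x - y)) /\
  (forall x y, A x -> A y -> A (x * y)).

Definition domain_with_quotient_field (D : K -> Prop) : Prop :=
  subring D /\ forall x : K, exists a b, D a /\ D b /\ b != 0 /\ x = a / b.

Definition prodset (A B : K -> Prop) : K -> Prop :=
  fun x => exists (n : nat) (a b : 'I_n -> K),
    (forall i, A (a i)) /\ (forall i, B (b i)) /\ x = \sum_(i < n) a i * b i.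

Definition seteq (A B : K -> Prop) : Prop := forall x, A x <-> B x.

Definition overring (D T : K -> Prop) : Prop :=
  subring T /\ (forall x, D x -> T x).

(* Flatness of the D-module T, via the equational criterion of flatness. *)
Definition flat_over (D T : K -> Prop) : Prop :=
  forall (n : nat) (a m : 'I_n -> K),
    (forall i, D (a i)) -> (forall i, T (m i)) ->
    \sum_(i < n) a i * m i = 0 ->
    exists (p : nat) (b : 'I_n -> 'I_p -> K) (m' : 'I_p -> K),
      (forall i j, D (b i j)) /\ (forall j, T (m' j)) /\
      (forall i, m i = \sum_(j < p) b i j * m' j) /\
      (forall j, \sum_(i < n) a i * b i j = 0).

Definition ideal (D I : K -> Prop) : Prop :=
  (forall x, I x -> D x) /\ I 0 /\ (forall x y, I x -> I y -> I (x + y)) /\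
  (forall d x, D d -> I x -> I (d * x)).

Definition submodule (A I : K -> Prop) : Prop :=
  I 0 /\ (forall x y, I x -> I y -> I (x + y)) /\
  (forall d x, A d -> I x -> I (d * x)).

Definition fractional (A I : K -> Prop) : Prop :=
  submodule A I /\ exists d, A d /\ d != 0 /\ forall x, I x -> A (d * x).

Definition invertible (A I : K -> Prop) : Prop :=
  fractional A I /\ exists J, fractional A J /\ seteq (prodset I J) A.

Definition principal (A I : K -> Prop) : Prop :=
  exists x : K, seteq I (fun y => exists a, A a /\ y = x * a).

Definition pic_equiv (I J : K -> Prop) : Prop :=
  exists x : K, x != 0 /\ seteq I (fun y => exists z, J z /\ y = x * z).

Definition zariski_open (D : K -> Prop) (O : (K -> Prop) -> Prop) : Prop :=
  forall T, overring D T -> O T ->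
    exists F : seq K, (forall x, x \in F -> T x) /\
      forall T', overring D T' -> (forall x, x \in F -> T' x) -> O T'.

Definition zariski_compact (D : K -> Prop) (Theta : (K -> Prop) -> Prop) : Prop :=
  forall U : ((K -> Prop) -> Prop) -> Prop,
    (forall O, U O -> zariski_open D O) ->
    (forall T, Theta T -> exists O, U O /\ O T) ->
    exists s : seq ((K -> Prop) -> Prop),
      (forall O, List.In O s -> U O) /\
      (forall T, Theta T -> exists O, List.In O s /\ O T).

Definition pre_jaffard (D : K -> Prop) (Theta : (K -> Prop) -> Prop) : Prop :=
  [/\
      (forall T, Theta T <-> seteq T (fun _ => True)) \/
        (forall T, Theta T -> ~ seteq T (fun _ => True)),
      (forall T, Theta T -> overring D T /\ flat_over D T),
      (forall I, ideal D I ->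
         forall x, I x <-> (forall T, Theta T -> prodset I T x)),
      (forall T T', Theta T -> Theta T' -> ~ seteq T T' ->
         seteq (prodset T T') (fun _ => True)) &
      zariski_compact D Theta].

Definition unit_in (T : K -> Prop) (x : K) : Prop :=
  exists y, T y /\ x * y = 1.

Definition jaffard (D : K -> Prop) (Theta : (K -> Prop) -> Prop) : Prop :=
  pre_jaffard D Theta /\
  forall x, D x -> x != 0 ->
    exists s : seq (K -> Prop),
      forall T, Theta T -> ~ unit_in T x -> List.In T s.

Definition in_pic_theta (D : K -> Prop) (Theta : (K -> Prop) -> Prop)
  (I : K -> Prop) : Prop :=
  invertible D I /\ forall T, Theta T -> principal T (prodset I T).

End Defs.

(* Main.v *)
Require Import Defs.
From Stdlib Require List.
From Stdlib Require Import FunctionalExtensionality PropExtensionality Classical.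
From mathcomp Require Import all_boot all_order all_algebra.
From mathcomp Require Import ring.
Set Implicit Arguments. Unset Strict Implicit. Unset Printing Implicit Defensive.
Import GRing.Theory.
Local Open Scope ring_scope.


Section Basics.
Variable K : fieldType.
Implicit Types A B C E : K -> Prop.

Lemma seteq_eq A B : seteq A B -> A = B.
Proof.
move=> H; apply: functional_extensionality => x.
by apply: propositional_extensionality; apply: H.
Qed.

Definition pr A B (x : K) : Prop :=
  exists l : seq (K * K), (forall p, p \in l -> A p.1 /\ B p.2) /\
    x = \sum_(p <- l) p.1 * p.2.

Lemma pr0 A B : pr A B 0.
Proof. by exists [::]; split => //; rewrite big_nil. Qed.

Lemma prD A B x y : pr A B x -> pr A B y -> pr A B (x + y).
Proof.
move=> [l1 [H1 ->]] [l2 [H2 ->]]; exists (l1 ++ l2); split; last by rewrite big_cat.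
by move=> p; rewrite mem_cat => /orP [] ?; [apply: H1|apply: H2].
Qed.

Lemma pr_elem A B a b : A a -> B b -> pr A B (a * b).
Proof.
move=> Ha Hb; exists [:: (a, b)]; split; last by rewrite big_seq1.
by move=> p; rewrite inE => /eqP ->.
Qed.

Lemma pr_ind A B (Q : K -> Prop) : Q 0 -> (forall x y, Q x -> Q y -> Q (x + y)) ->
  (forall a b, A a -> B b -> Q (a * b)) -> forall x, pr A B x -> Q x.
Proof.
move=> Q0 QD Qe x [l [Hl ->]]; elim: l Hl => [|p l IH] Hl; first by rewrite big_nil.
rewrite big_cons; apply: QD.
  by have [] := Hl p (mem_head _ _); apply: Qe.
by apply: IH => q Hq; apply: Hl; rewrite in_cons Hq orbT.
Qed.

Lemma pr_sub A B A' B' : (forall x, A x -> A' x) -> (forall x, B x -> B' x) ->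
  forall x, pr A B x -> pr A' B' x.
Proof.
move=> HA HB; apply: pr_ind; [exact: pr0 | exact: prD |].
by move=> a b Ha Hb; apply: pr_elem; [apply: HA | apply: HB].
Qed.

Lemma pr_comm A B : pr A B = pr B A.
Proof.
have H : forall A B x, pr A B x -> pr B A x.
  move=> A1 B1; apply: pr_ind; [exact: pr0 | exact: prD |].
  by move=> a b Ha Hb; rewrite mulrC; apply: pr_elem.
by apply: seteq_eq => x; split; apply: H.
Qed.

Lemma pr_map_l A A' B (k : K) : (forall a, A a -> A' (k * a)) ->
  forall x, pr A B x -> pr A' B (k * x).
Proof.
move=> H; apply: pr_ind; first by rewrite mulr0; apply: pr0.
  by move=> x y Hx Hy; rewrite mulrDr; apply: prD.
by move=> a b Ha Hb; rewrite mulrA; apply: pr_elem => //; apply: H.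
Qed.

Lemma pr_map_r A B B' (k : K) : (forall b, B b -> B' (k * b)) ->
  forall x, pr A B x -> pr A B' (k * x).
Proof.
move=> H x; rewrite pr_comm => Hx; rewrite pr_comm; exact: pr_map_l Hx.
Qed.

Lemma pr_assoc1 A B C x : pr (pr A B) C x -> pr A (pr B C) x.
Proof.
apply: pr_ind; [exact: pr0 | exact: prD |].
move=> y c Hy Hc; rewrite mulrC; move: y Hy; apply: pr_ind.
- by rewrite mulr0; apply: pr0.
- by move=> x1 y1 H1 H2; rewrite mulrDr; apply: prD.
- move=> a b Ha Hb; rewrite mulrCA; apply: pr_elem => //.
  by rewrite mulrC; apply: pr_elem.
Qed.

Lemma pr_assoc A B C : pr (pr A B) C = pr A (pr B C).
Proof.
apply: seteq_eq => x; split; first exact: pr_assoc1.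
rewrite pr_comm (pr_comm B C) => H.
have H2 := pr_assoc1 H; by rewrite pr_comm (pr_comm B A) in H2.
Qed.

Lemma pr_interchange A B C E : pr (pr A B) (pr C E) = pr (pr A C) (pr B E).
Proof.
by rewrite !pr_assoc -(pr_assoc B) (pr_comm B C) pr_assoc.
Qed.

Definition scale (k : K) A := fun y => exists z, A z /\ y = k * z.

Lemma pr_scale k A B : pr (scale k A) B = scale k (pr A B).
Proof.
apply: seteq_eq => x; split.
  move: x; apply: pr_ind.
  - by exists 0; split; [apply: pr0 | rewrite mulr0].
  - by move=> x y [z1 [H1 ->]] [z2 [H2 ->]]; exists (z1 + z2); split; [apply: prD | rewrite mulrDr].
  - by move=> a b [z [Hz ->]] Hb; exists (z * b); split; [apply: pr_elem | rewrite mulrA].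
move=> [z [Hz ->]]; apply: pr_map_l Hz => a Ha; by exists a.
Qed.

Lemma scaleM k1 k2 A : scale k1 (scale k2 A) = scale (k1 * k2) A.
Proof.
apply: seteq_eq => x; split.
  by move=> [y [[z [Hz ->]] ->]]; exists z; rewrite mulrA.
by move=> [z [Hz ->]]; exists (k2 * z); split; [exists z | rewrite mulrA].
Qed.

Lemma scale1 A : scale 1 A = A.
Proof.
apply: seteq_eq => x; split; first by move=> [z [Hz ->]]; rewrite mul1r.
by move=> Hx; exists x; rewrite mul1r.
Qed.

End Basics.



Section B.
Variable K : fieldType.
Implicit Types A B C E T R Q D : K -> Prop.

Lemma pr_ord A B n (a b : 'I_n -> K) : (forall i, A (a i)) -> (forall i, B (b i)) ->
  pr A B (\sum_(i < n) a i * b i).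
Proof.
move=> Ha Hb; apply: (big_ind (pr A B)); [exact: pr0 | exact: prD |].
by move=> i _; apply: pr_elem.
Qed.

Lemma prodsetE A B : prodset A B = pr A B.
Proof.
apply: seteq_eq => x; split.
  by move=> [n [a [b [Ha [Hb ->]]]]]; apply: pr_ord.
move=> [l [Hl ->]]; elim: l Hl => [|p l IH] Hl.
  exists 0%N, (fun _ => 0), (fun _ => 0); rewrite big_nil big_ord0.
  by split; [case | split; [case|]].
have [n [a [b [Ha [Hb Hs]]]]] : prodset A B (\sum_(q <- l) q.1 * q.2).
  by apply: IH => q Hq; apply: Hl; rewrite in_cons Hq orbT.
have [Hp1 Hp2] := Hl p (mem_head _ _).
exists n.+1, (fun i => if unlift ord0 i is Some j then a j else p.1),
  (fun i => if unlift ord0 i is Some j then b j else p.2).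
split; first by move=> i; case: (unlift ord0 i).
split; first by move=> i; case: (unlift ord0 i).
rewrite big_cons big_ord_recl unlift_none Hs; congr (_ + _).
by apply: eq_bigr => i _; rewrite liftK.
Qed.

Lemma sr0 T : subring T -> T 0. Proof. by case. Qed.
Lemma sr1 T : subring T -> T 1. Proof. by case=> _ []. Qed.
Lemma srB T x y : subring T -> T x -> T y -> T (x - y). Proof. by case=> _ [_ []] H _; apply: H. Qed.
Lemma srM T x y : subring T -> T x -> T y -> T (x * y). Proof. by case=> _ [_ []] _ H; apply: H. Qed.
Lemma srN T x : subring T -> T x -> T (- x).
Proof. by move=> HT Hx; rewrite -sub0r; apply: srB => //; apply: sr0. Qed.
Lemma srD T x y : subring T -> T x -> T y -> T (x + y).
Proof. by move=> HT Hx Hy; rewrite -(opprK y); apply: srB => //; apply: srN. Qed.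

Lemma pr_in T A B : subring T -> (forall a b, A a -> B b -> T (a * b)) ->
  forall x, pr A B x -> T x.
Proof. move=> HT H; apply: pr_ind => //; [exact: sr0 | by move=> *; apply: srD]. Qed.

Lemma pr_submod R Q : R 1 -> submodule R Q -> pr Q R = Q.
Proof.
move=> R1 [Q0 [QD QM]]; apply: seteq_eq => x; split.
  by apply: pr_ind => // a b Ha Hb; rewrite mulrC; apply: QM.
by move=> Hx; rewrite -[x]mulr1; apply: pr_elem.
Qed.

Lemma submod_pr R A B : submodule R A -> submodule R (pr A B).
Proof.
move=> [_ [_ AM]]; split; first exact: pr0.
split; first by move=> *; apply: prD.
by move=> d x Hd Hx; apply: pr_map_l Hx => a Ha; apply: AM.
Qed.

Lemma submod_ring R : subring R -> submodule R R.
Proof. move=> HR; split; [exact: sr0 | split => *; [apply: srD | apply: srM]] => //. Qed.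

Lemma submod_over R T : subring T -> (forall x, R x -> T x) -> submodule R T.
Proof. move=> HT HRT; split; [exact: sr0 | split => *; [apply: srD | apply: srM]] => //; exact: HRT. Qed.

Lemma pr_self T : subring T -> pr T T = T.
Proof. by move=> HT; apply: pr_submod; [apply: sr1 | apply: submod_ring]. Qed.

Lemma pr_DT D T : subring D -> subring T -> (forall x, D x -> T x) -> pr D T = T.
Proof. by move=> HD HT HDT; rewrite pr_comm; apply: pr_submod; [apply: sr1 | apply: submod_over]. Qed.

Lemma pr_zero A B : (forall a, A a -> a = 0) -> forall x, pr A B x -> x = 0.
Proof.
move=> H; apply: pr_ind => //; first by move=> x y -> ->; rewrite addr0.
by move=> a b /H -> _; rewrite mul0r.
Qed.

End B.



Section C.
Variable K : fieldType.
Implicit Types A B C E T R Q D : K -> Prop.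

Definition quot D := forall y : K, exists a b, D a /\ D b /\ b != 0 /\ y = a / b.

Lemma conductor1 D T x : subring D -> quot D -> subring T -> flat_over D T -> T x ->
  pr (fun c => D c /\ D (c * x)) T 1.
Proof.
move=> HD Hq HT Hfl Hx.
have [a0 [b [Ha [Hb [bn Hxe]]]]] := Hq x.
pose av := fun i : 'I_2 => if val i == 0%N then b else - a0.
pose m := fun i : 'I_2 => if val i == 0%N then x else 1.
have [] := Hfl 2%N av m.
- by move=> i; rewrite /av; case: (val i == 0%N) => //; apply: srN.
- by move=> i; rewrite /m; case: (val i == 0%N) => //; apply: sr1.
- rewrite !big_ord_recl big_ord0 /av /m /= Hxe; field => //.
move=> p [bm [m' [Hbm [Hm' [Hmi Hrel]]]]].
have := Hmi (@lift 2 ord0 ord0); rewrite /m /= => ->.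
apply: pr_ord => // j; split => //.
have := Hrel j; rewrite !big_ord_recl big_ord0 /av /= Hxe => Hj.
have -> : bm (@lift 2 ord0 ord0) j * (a0 / b) = bm ord0 j.
  apply: (mulfI bn); rewrite addr0 in Hj.
  have : b * bm ord0 j = a0 * bm (lift ord0 ord0) j.
    by apply/eqP; rewrite -subr_eq0 -mulNr; apply/eqP.
  move=> ->; field => //.
exact: Hbm.
Qed.


Lemma conductor D T (xs : seq K) : subring D -> quot D -> subring T -> flat_over D T ->
  (forall x, x \in xs -> T x) ->
  pr (fun c => D c /\ forall x, x \in xs -> D (c * x)) T 1.
Proof.
move=> HD Hq HT Hfl; elim: xs => [|x xs IH] Hxs.
  by rewrite -[1]mulr1; apply: pr_elem; [split; [apply: sr1|] | apply: sr1].
have H1 := conductor1 HD Hq HT Hfl (Hxs x (mem_head _ _)).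
have H2 : pr (fun c => D c /\ forall y, y \in xs -> D (c * y)) T 1.
  by apply: IH => y Hy; apply: Hxs; rewrite in_cons Hy orbT.
have := pr_elem H1 H2; rewrite mulr1 pr_interchange pr_self // => H.
refine (pr_sub _ (fun y (h : T y) => h) H); apply: pr_ind.
- split; first exact: sr0.
  by move=> y _; rewrite mul0r; apply: sr0.
- move=> c1 c2 [H1a H1b] [H2a H2b]; split; first by apply: srD.
  by move=> y Hy; rewrite mulrDl; apply: srD => //; [apply: H1b | apply: H2b].
- move=> c1 c2 [H1a H1b] [H2a H2b]; split; first by apply: srM.
  move=> y; rewrite in_cons => /orP [/eqP -> | Hy].
    by rewrite mulrAC; apply: srM.
  by rewrite -mulrA; apply: srM => //; apply: H2b.
Qed.

Definition colon D A := fun y : K => forall z, A z -> D (y * z).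


Definition G (gs : seq K) := fun z : K => z \in gs.

Lemma colon_lem D T gs x : subring D -> quot D -> subring T -> flat_over D T ->
  (forall g, g \in gs -> D g) -> (forall g, g \in gs -> T (x * g)) ->
  pr (colon D (pr (G gs) D)) T x.
Proof.
move=> HD Hq HT Hfl HgD HgT.
have H := conductor (xs := map (fun g => x * g) gs) HD Hq HT Hfl.
have {H} H := H (fun y Hy => match mapP Hy with ex_intro2 g Hg e => eq_ind_r T (HgT g Hg) e end).
rewrite -[x]mulr1; apply: pr_map_l H => c [Hc Hcx].
rewrite /colon; apply: pr_ind.
- by rewrite mulr0; apply: sr0.
- by move=> y z Hy Hz; rewrite mulrDr; apply: srD.
- move=> g d Hg Hd.
  have -> : x * c * (g * d) = c * (x * g) * d by ring.
  apply: srM => //; apply: Hcx; exact: map_f.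
Qed.

Lemma INV D (Theta : (K -> Prop) -> Prop) gs g0 : subring D -> quot D ->
  (forall T, Theta T -> [/\ subring T, (forall x, D x -> T x) & flat_over D T]) ->
  (forall I, ideal D I -> forall x, I x <-> (forall T, Theta T -> prodset I T x)) ->
  (forall g, g \in gs -> D g) -> g0 \in gs -> g0 != 0 ->
  (forall T, Theta T -> invertible T (pr (pr (G gs) D) T)) ->
  invertible D (pr (G gs) D).
Proof.
move=> HD Hq HTh Hcomp HgD Hg0 g0n Hinv.
set I := pr (G gs) D.
have ID : forall x, I x -> D x.
  by apply: pr_in => // a b Ha Hb; apply: srM => //; apply: HgD.
have IM : forall d x, D d -> I x -> I (d * x).
  by move=> d x Hd; apply: pr_map_r => b Hb; apply: srM.
have Ig : forall g, g \in gs -> I g.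
  by move=> g Hg; rewrite -[g]mulr1; apply: pr_elem => //; apply: sr1.
set C := colon D I.
set M := pr I C.
have MD : forall x, M x -> D x.
  by apply: pr_in => // a b Ha Hb; rewrite mulrC; apply: Hb.
have MM : forall d x, D d -> M x -> M (d * x).
  by move=> d x Hd; apply: pr_map_l => a Ha; apply: IM.
have M1 : M 1.
  apply/(Hcomp M); first by split => //; split; [apply: pr0 | split => *; [apply: prD|apply: MM]].
  move=> T HT; rewrite prodsetE.
  have [HTs HDT Hfl] := HTh T HT.
  have [_ [J' [_ HJ']]] := Hinv T HT.
  rewrite prodsetE in HJ'; have {}HJ' := seteq_eq HJ'.
  have J'C : forall y, J' y -> pr C T y.
    move=> y Hy; apply: colon_lem => // g Hg.
    rewrite -HJ' mulrC; apply: pr_elem => //.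
    by rewrite -[g]mulr1; apply: pr_elem; [apply: Ig | apply: sr1].
  have : pr (pr I T) J' 1 by rewrite HJ'; apply: sr1.
  move/(pr_sub (fun x h => h) J'C).
  by rewrite pr_interchange pr_self.
split.
  split; first by split; [apply: pr0 | split => *; [apply: prD | apply: IM]].
  exists 1; split; first exact: sr1.
  by split; [apply: oner_neq0 | move=> x Hx; rewrite mul1r; apply: ID].
exists C; split.
  split.
    split; first by move=> z _; rewrite mul0r; apply: sr0.
    split; first by move=> y1 y2 H1 H2 z Hz; rewrite mulrDl; apply: srD => //; [apply: H1|apply: H2].
    by move=> d y Hd Hy z Hz; rewrite -mulrA; apply: srM => //; apply: Hy.
  exists g0; split; first exact: HgD.
  by split => // y Hy; rewrite mulrC; apply: Hy; apply: Ig.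
rewrite prodsetE => x; split; first exact: MD.
by move=> Hx; rewrite -[x]mulr1; apply: MM.
Qed.

End C.





Section E.
Variable K : fieldType.
Implicit Types A B C E T R Q D : K -> Prop.

Lemma lemA D T0 T J1 (d : K) : subring D -> quot D -> subring T0 -> (forall x, D x -> T0 x) ->
  subring T -> flat_over D T -> (forall x, pr T0 T x) -> submodule T0 J1 ->
  D d -> J1 d -> d != 0 -> pr (fun z => D z /\ J1 z) T 1.
Proof.
move=> HD Hq HT0 HDT0 HT Hfl Hind HJ1 Hd HJd dn.
have [l [Hl He]] := Hind d^-1.
have H := conductor (xs := map snd l) HD Hq HT Hfl.
have {H} H := H (fun y Hy => match mapP Hy with ex_intro2 p Hp e => eq_ind_r T (proj2 (Hl p Hp)) e end).
refine (pr_sub _ (fun y (h : T y) => h) H) => c [Hc Hcx]; split => //.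
have Hs : \sum_(p <- l) p.1 * (c * p.2) = c * d^-1.
  by rewrite He big_distrr; apply: eq_bigr => p _; rewrite mulrCA.
have -> : c = (\sum_(p <- l) p.1 * (c * p.2)) * d.
  by rewrite Hs; field.
case: HJ1 => _ [_ HM]; apply: HM => //.
rewrite big_seq; apply: (big_ind T0); [exact: sr0 | by move=> *; apply: srD |].
move=> p Hp; apply: srM => //; first exact: (proj1 (Hl p Hp)).
apply: HDT0; apply: Hcx; exact: map_f.
Qed.


Lemma pr_extract A B x : pr A B x -> exists l : seq K, (forall z, z \in l -> A z) /\ pr (G l) B x.
Proof.
move=> [lp [Hl He]]; exists (map fst lp); split.
  by move=> z /mapP [p Hp ->]; exact: (proj1 (Hl p Hp)).
exists lp; split => // p Hp; split; last exact: (proj2 (Hl p Hp)).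
by rewrite /G; apply: map_f.
Qed.

Lemma pr_extract_list A B (hs : seq K) : (forall h, h \in hs -> pr A B h) ->
  exists l : seq K, (forall z, z \in l -> A z) /\ forall h, h \in hs -> pr (G l) B h.
Proof.
elim: hs => [|h hs IH] H; first by exists [::].
have [l1 [H1a H1b]] := pr_extract (H h (mem_head _ _)).
have [l2 [H2a H2b]] : exists l : seq K, (forall z, z \in l -> A z) /\ forall h, h \in hs -> pr (G l) B h.
  by apply: IH => y Hy; apply: H; rewrite in_cons Hy orbT.
exists (l1 ++ l2); split.
  by move=> z; rewrite mem_cat => /orP [] ?; [apply: H1a | apply: H2a].
move=> y; rewrite in_cons => /orP [/eqP -> | Hy].
  by apply: (pr_sub _ (fun _ h => h) H1b) => z; rewrite /G mem_cat => ->.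
by apply: (pr_sub _ (fun _ h => h) (H2b y Hy)) => z; rewrite /G mem_cat => ->; rewrite orbT.
Qed.

Lemma pr_map2 A A' B B' (k1 k2 x : K) : (forall a, A a -> A' (k1 * a)) ->
  (forall b, B b -> B' (k2 * b)) -> pr A B x -> pr A' B' (k1 * k2 * x).
Proof.
move=> H1 H2 Hx; rewrite -mulrA; apply: pr_map_l H1 _ _.
exact: pr_map_r H2 _ Hx.
Qed.

Lemma pr_idem A T : subring T -> pr (pr A T) T = pr A T.
Proof. by move=> HT; rewrite pr_assoc pr_self. Qed.

Lemma submod_scale R I k : submodule R I -> submodule R (scale k I).
Proof.
move=> [I0 [ID IM]]; split; first by exists 0; rewrite mulr0.
split; first by move=> _ _ [z1 [H1 ->]] [z2 [H2 ->]]; exists (z1 + z2); rewrite mulrDr; split => //; apply: ID.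
by move=> d _ Hd [z [Hz ->]]; exists (d * z); rewrite mulrCA; split => //; apply: IM.
Qed.

Lemma invertible_self T : subring T -> invertible T T.
Proof.
move=> HT; have Hf : fractional T T.
  split; first exact: submod_ring.
  exists 1; split; first exact: sr1.
  by split; [exact: oner_neq0 | move=> x Hx; rewrite mul1r].
split => //; exists T; split => //.
by rewrite prodsetE pr_self.
Qed.

Lemma invertible_scale A I k : subring A -> A k -> k != 0 -> invertible A I ->
  invertible A (scale k I).
Proof.
move=> HA Hk kn [[HIs [d [Hd [dn HdI]]]] [J [[HJs [e [He [en HeJ]]]] HIJ]]].
split.
  split; first exact: submod_scale.
  exists d; split => //; split => // _ [z [Hz ->]].
  by rewrite mulrCA; apply: srM => //; apply: HdI.
exists (scale k^-1 J); split.
  split; first exact: submod_scale.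
  exists (e * k); split; first exact: srM.
  split; first exact: mulf_neq0.
  move=> _ [z [Hz ->]]; have -> : e * k * (k^-1 * z) = e * z by field.
  exact: HeJ.
rewrite prodsetE pr_scale pr_comm pr_scale scaleM mulfV // scale1 pr_comm.
by rewrite -prodsetE.
Qed.

End E.




Section F.
Variable K : fieldType.
Implicit Types A B C E T R Q : K -> Prop.
Variable D : K -> Prop.
Variable Theta : (K -> Prop) -> Prop.
Hypothesis HD : subring D.
Hypothesis Hq : quot D.
Hypothesis HTh : forall T, Theta T -> [/\ subring T, (forall x, D x -> T x) & flat_over D T].
Hypothesis Hcomp : forall I, ideal D I -> forall x, I x <-> (forall T, Theta T -> prodset I T x).
Hypothesis Hind : forall T T', Theta T -> Theta T' -> T <> T' -> forall x, pr T T' x.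
Hypothesis HLF : forall x, D x -> x != 0 ->
    exists s : seq (K -> Prop), forall T, Theta T -> ~ unit_in T x -> List.In T s.

Lemma single T0 J0 : Theta T0 -> invertible T0 J0 ->
  exists I0 k, invertible D I0 /\ k != 0 /\ pr I0 T0 = scale k J0 /\
    forall T, Theta T -> T <> T0 -> pr I0 T = T.
Proof.
move=> HT0 HJ0; have [HT0s HDT0 Hfl0] := HTh HT0.
have [[HJsub [d0 [Hd0 [d0n Hd0J]]]] [J' [HJ'f HJJ']]] := HJ0.
set J1 := scale d0 J0.
have J1T0 : forall y, J1 y -> T0 y by move=> _ [z [Hz ->]]; apply: Hd0J.
have J1m : submodule T0 J1 := submod_scale d0 HJsub.
have HJJ'e : pr J0 J' = T0 by rewrite -prodsetE; apply: seteq_eq.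
have one : pr J0 J' 1 by rewrite HJJ'e; apply: sr1.
have [as_ [Has Has1]] := pr_extract one.
set hs := map (fun a => d0 * a) as_.
have hsJ1 : forall h, h \in hs -> J1 h.
  by move=> h /mapP [a Ha ->]; exists a; split => //; apply: Has.
have J1hs : forall y, J1 y -> pr (G hs) T0 y.
  move=> _ [z [Hz ->]]; rewrite -[d0 * z]mulr1; apply: (pr_map2 _ _ Has1).
    by move=> a Ha; rewrite /G; apply: map_f.
  by move=> b Hb; rewrite -HJJ'e; apply: pr_elem.
have hsD : forall h, h \in hs -> pr (fun z => D z /\ J1 z) T0 h.
  move=> h Hh; have := conductor1 HD Hq HT0s Hfl0 (J1T0 _ (hsJ1 h Hh)).
  move=> H; rewrite -[h]mulr1; apply: pr_map_l H => c [Hc Hch]; split; first by rewrite mulrC.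
  by rewrite mulrC; apply: (proj2 (proj2 J1m)); [apply: HDT0 | apply: hsJ1].
have [gs0 [Hgs0 Hgs0h]] := pr_extract_list hsD.
have J1gs0 : forall y, J1 y -> pr (G gs0) T0 y.
  move=> y Hy; rewrite -(pr_idem (G gs0) HT0s).
  by apply: (pr_sub _ (fun _ h => h) (J1hs y Hy)) => h Hh; apply: Hgs0h.
have [a [Ha an]] : exists a, J0 a /\ a != 0.
  apply: NNPP => Hn.
  have := pr_zero (A := J0) (B := J') _ one.
  have H : forall a, J0 a -> a = 0.
    by move=> a Ha; apply: NNPP => Hna; apply: Hn; exists a; split => //; apply/eqP.
  by move=> /(_ H) /eqP; rewrite oner_eq0.
have [d [Hdg dn]] : exists d, d \in gs0 /\ d != 0.
  apply: NNPP => Hn.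
  have H : forall g, G gs0 g -> g = 0.
    by move=> g Hg; apply: NNPP => Hna; apply: Hn; exists g; split => //; apply/eqP.
  have : J1 (d0 * a) by exists a.
  move=> /J1gs0 /(pr_zero H) /eqP; rewrite mulf_eq0 (negbTE an) (negbTE d0n).
  by [].
have [HdD HdJ1] := Hgs0 d Hdg.
have [s Hs] := HLF HdD dn.
have [es [Hes Hes1]] : exists es : seq K, (forall z, z \in es -> D z /\ J1 z) /\
    forall T, Theta T -> T <> T0 -> List.In T s -> pr (G es) T 1.
  clear Hs; elim: s => [|T s IH]; first by exists [::]; split => // T _ _ [].
  have [es [Hes Hes1]] := IH.
  case: (classic (Theta T /\ T <> T0)) => [[HT HTT0]|HnT].
    have [HTs HDT HflT] := HTh HT.
    have H := lemA HD Hq HT0s HDT0 HTs HflT (Hind HT0 HT (nesym HTT0)) J1m HdD HdJ1 dn.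
    have [l [Hl Hl1]] := pr_extract H.
    exists (l ++ es); split.
      by move=> z; rewrite mem_cat => /orP [] ?; [apply: Hl | apply: Hes].
    move=> T' HT' HT'0 [<-|Hin].
      by apply: (pr_sub _ (fun _ h => h) Hl1) => z; rewrite /G mem_cat => ->.
    apply: (pr_sub _ (fun _ h => h) (Hes1 T' HT' HT'0 Hin)) => z.
    by rewrite /G mem_cat => ->; rewrite orbT.
  exists es; split => //.
  move=> T' HT' HT'0 [Heq|Hin]; last exact: Hes1.
  by subst T'; exfalso; apply: HnT.
set gs := gs0 ++ es.
have gsD : forall g, g \in gs -> D g /\ J1 g.
  by move=> g; rewrite mem_cat => /orP [] ?; [apply: Hgs0 | apply: Hes].
set I0 := pr (G gs) D.
have HI0T : forall T, Theta T -> pr I0 T = pr (G gs) T.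
  move=> T HT; have [HTs HDT _] := HTh HT; rewrite /I0 pr_assoc.
  by rewrite (@pr_DT _ D T).
have HI0T0 : pr I0 T0 = J1.
  rewrite HI0T //; apply: seteq_eq => y; split.
    apply: pr_ind; first exact: (proj1 J1m).
      by move=> *; apply: (proj1 (proj2 J1m)).
    move=> g t Hg Ht; rewrite mulrC; apply: (proj2 (proj2 J1m)) => //.
    exact: (proj2 (gsD g Hg)).
  move=> /J1gs0; apply: pr_sub => // z; rewrite /G mem_cat => ->.
  by [].
have HI0T' : forall T, Theta T -> T <> T0 -> pr I0 T = T.
  move=> T HT HTT0; have [HTs HDT _] := HTh HT; rewrite HI0T //.
  have one' : pr (G gs) T 1.
    case: (classic (unit_in T d)) => [[y [Hy Hdy]]|Hnu].
      by rewrite -Hdy; apply: pr_elem => //; rewrite /G mem_cat Hdg.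
    apply: (pr_sub _ (fun _ h => h) (Hes1 T HT HTT0 (Hs T HT Hnu))) => z.
    by rewrite /G mem_cat => ->; rewrite orbT.
  apply: seteq_eq => y; split.
    apply: pr_in => // g t Hg Ht; apply: srM => //; apply: HDT; exact: (proj1 (gsD g Hg)).
  by move=> Hy; rewrite -[y]mulr1; apply: pr_map_r one' => b Hb; apply: srM.
exists I0, d0; split.
  apply: (INV (Theta := Theta) (g0 := d)) => //.
  - by move=> g Hg; exact: (proj1 (gsD g Hg)).
  - by rewrite mem_cat Hdg.
  - move=> T HT; case: (classic (T = T0)) => [->|HTT0].
      by rewrite HI0T0; apply: invertible_scale.
    by rewrite HI0T' //; apply: invertible_self; have [] := HTh HT.
by split.
Qed.


Lemma inv_nz A I : subring A -> invertible A I -> exists a, I a /\ a != 0.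
Proof.
move=> HA [_ [J [_ HIJ]]].
rewrite prodsetE in HIJ; have {}HIJ := seteq_eq HIJ.
have one : pr I J 1 by rewrite HIJ; apply: sr1.
apply: NNPP => Hn.
have H : forall a, I a -> a = 0.
  by move=> a Ha; apply: NNPP => Hna; apply: Hn; exists a; split => //; apply/eqP.
by have /eqP := pr_zero H one; rewrite oner_eq0.
Qed.

Lemma frac_ext R T I : subring T -> (forall x, R x -> T x) -> fractional R I ->
  fractional T (pr I T).
Proof.
move=> HT HRT [HIs [d [Hd [dn HdI]]]]; split.
  by rewrite pr_comm; apply: submod_pr; apply: submod_ring.
exists d; split; first exact: HRT.
split => // x Hx.
have := pr_map_l (A' := R) HdI Hx.
by apply: pr_in => // a b Ha Hb; apply: srM => //; apply: HRT.
Qed.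

Lemma ext_inv R T I : subring R -> subring T -> (forall x, R x -> T x) ->
  invertible R I -> invertible T (pr I T).
Proof.
move=> HR HT HRT [HIf [I' [HI'f HII']]]; split; first exact: frac_ext HIf.
exists (pr I' T); split; first exact: frac_ext HI'f.
rewrite prodsetE pr_interchange pr_self //.
rewrite prodsetE in HII'; rewrite (seteq_eq HII') pr_DT //.
Qed.

Lemma frac_mul R I J : subring R -> fractional R I -> fractional R J -> fractional R (pr I J).
Proof.
move=> HR [HIs [d [Hd [dn HdI]]]] [HJs [e [He [en HeJ]]]]; split.
  exact: submod_pr.
exists (d * e); split; first exact: srM.
split; first exact: mulf_neq0.
move=> x Hx; have := pr_map2 (A' := R) (B' := R) HdI HeJ Hx.
by apply: pr_in => // a b Ha Hb; apply: srM.
Qed.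

Lemma inv_mul R I J : subring R -> invertible R I -> invertible R J -> invertible R (pr I J).
Proof.
move=> HR [HIf [I' [HI'f HII']]] [HJf [J' [HJ'f HJJ']]]; split; first exact: frac_mul.
exists (pr I' J'); split; first exact: frac_mul.
rewrite prodsetE pr_interchange.
rewrite prodsetE in HII'; rewrite prodsetE in HJJ'.
by rewrite (seteq_eq HII') (seteq_eq HJJ') pr_self.
Qed.


Lemma surj (J : (K -> Prop) -> (K -> Prop)) : (forall T, Theta T -> invertible T (J T)) ->
  forall l : seq (K -> Prop), exists I, invertible D I /\ forall T, Theta T ->
    (List.In T l -> exists k, k != 0 /\ pr I T = scale k (J T)) /\ (~ List.In T l -> pr I T = T).
Proof.
move=> HJ; elim => [|T0 l [I [HI HIT]]].
  exists D; split; first exact: invertible_self.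
  move=> T HT; split => // _; have [HTs HDT _] := HTh HT; exact: pr_DT.
case: (classic (List.In T0 l \/ ~ Theta T0)) => [Hc|Hc].
  exists I; split => // T HT; have [H1 H2] := HIT T HT; split.
    move=> [Heq|Hin]; last exact: H1.
    subst T0; case: Hc => // Hin; exact: H1.
  by move=> Hn; apply: H2 => Hin; apply: Hn; right.
have HT0 : Theta T0 by apply: NNPP => Hn; apply: Hc; right.
have HnT0 : ~ List.In T0 l by move=> Hin; apply: Hc; left.
have [I0 [k [HI0 [kn [HI0T0 HI0T]]]]] := single HT0 (HJ T0 HT0).
exists (pr I I0); split; first exact: inv_mul.
move=> T HT; have [HTs HDT _] := HTh HT.
have HE : pr (pr I I0) T = pr (pr I T) (pr I0 T) by rewrite pr_interchange pr_self.
have [H1 H2] := HIT T HT.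
case: (classic (T = T0)) => [Heq|Hne].
  subst T0; split => [_|Hn]; last by exfalso; apply: Hn; left.
  exists k; split => //; rewrite HE HI0T0 (H2 HnT0) pr_comm pr_scale.
  have [[HJs _] _] := HJ T HT.
  by rewrite pr_submod //; apply: sr1.
rewrite HE (HI0T T HT Hne) pr_idem //; split.
  by move=> [Heq|Hin]; [exfalso; apply: Hne | apply: H1].
by move=> Hn; apply: H2 => Hin; apply: Hn; right.
Qed.

End F.




Unset Implicit Arguments.


Theorem proposition4p5 (K : fieldType) (D : K -> Prop)
  (Theta : (K -> Prop) -> Prop) :
  domain_with_quotient_field D -> jaffard D Theta ->
  [/\
   (forall I, invertible D I ->
      (forall T, Theta T -> invertible T (prodset I T)) /\
      exists s : seq (K -> Prop),
        forall T, Theta T -> ~ principal T (prodset I T) -> List.In T s),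
   (forall I I', invertible D I -> invertible D I' -> pic_equiv I I' ->
      forall T, Theta T -> pic_equiv (prodset I T) (prodset I' T)),
   (forall I J, invertible D I -> invertible D J -> forall T, Theta T ->
      seteq (prodset (prodset I J) T)
            (prodset (prodset I T) (prodset J T))),
   (forall I, invertible D I ->
      (in_pic_theta D Theta I <->
       forall T, Theta T -> pic_equiv (prodset I T) T)) &
   (forall J : (K -> Prop) -> (K -> Prop),
      (forall T, Theta T -> invertible T (J T)) ->
      (exists s : seq (K -> Prop),
         forall T, Theta T -> ~ principal T (J T) -> List.In T s) ->
      exists I, invertible D I /\
        forall T, Theta T -> pic_equiv (prodset I T) (J T))].
Proof.
move=> [HDs Hqd] [[HK0 Hov Hcomp Hind0 Hzc] HLF].
have HTh : forall T, Theta T -> [/\ subring T, (forall x, D x -> T x) & flat_over D T].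
  by move=> T /Hov [[HTs HDT] Hfl]; split.
have Hind : forall T T', Theta T -> Theta T' -> T <> T' -> forall x, pr T T' x.
  move=> T T' HT HT' Hne x.
  have H := Hind0 T T' HT HT' (fun Heq => Hne (seteq_eq Heq)).
  by rewrite -prodsetE; apply/H.
split.
- move=> I HI; split.
    by move=> T HT; have [HTs HDT _] := HTh T HT; rewrite prodsetE; apply: ext_inv HI.
  have [[_ [d [Hd [dn HdI]]]] _] := HI.
  have [a [Ha an]] := inv_nz HDs HI.
  have Hy : D (d * a) by apply: HdI.
  have yn : d * a != 0 by apply: mulf_neq0.
  have [s Hs] := HLF _ Hy yn.
  exists s => T HT Hnp; apply: NNPP => Hnin; apply: Hnp.
  have [w [Hw Hyw]] : unit_in T (d * a) by apply: NNPP => Hu; apply: Hnin; apply: Hs.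
  have [HTs HDT _] := HTh T HT.
  exists d^-1; rewrite prodsetE => z; split.
    move=> Hz; exists (d * z); split; last by field.
    have := pr_map_l (A' := D) HdI Hz.
    by apply: pr_in => // a1 b1 Ha1 Hb1; apply: srM => //; apply: HDT.
  move=> [t [Ht ->]].
  have -> : d^-1 * t = a * (t * w).
    by rewrite -[d^-1 * t]mulr1 -Hyw; field.
  by apply: pr_elem => //; apply: srM.
- move=> I I' _ _ [x [xn Hx]] T HT; exists x; split => //.
  have HI : I = scale x I' := seteq_eq Hx.
  by rewrite !prodsetE HI pr_scale => y; split.
- move=> I J _ _ T HT; have [HTs _ _] := HTh T HT.
  by rewrite !prodsetE pr_interchange pr_self // => y; split.
- move=> I HI; split.
    move=> [_ Hp] T HT; have [x Hx] := Hp T HT; exists x; split => //.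
    apply/eqP => x0.
    have [a [Ha an]] := inv_nz HDs HI.
    have [HTs _ _] := HTh T HT.
    have : prodset I T (a * 1) by rewrite prodsetE; apply: pr_elem => //; apply: sr1.
    move=> /Hx [t [_]]; rewrite x0 mul0r mulr1 => a0.
    by rewrite a0 eqxx in an.
  move=> H; split => // T HT; have [x [_ Hx]] := H T HT; by exists x.
- move=> J HJ [s Hs].
  have [I [HI HIT]] := surj HDs Hqd HTh Hcomp Hind HLF HJ s.
  exists I; split => // T HT; have [H1 H2] := HIT T HT; have [HTs _ _] := HTh T HT.
  case: (classic (List.In T s)) => Hin.
    have [k [kn Hk]] := H1 Hin; exists k; split => //.
    by rewrite prodsetE Hk => y; split.
  have Hp : principal T (J T) := NNPP _ (fun Hn => Hin (Hs T HT Hn)).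
  have [x Hx] := Hp.
  have HJx : J T = scale x T := seteq_eq Hx.
  have xn : x != 0.
    have [a [Ha an]] := inv_nz HTs (HJ T HT).
    rewrite HJx in Ha; case: Ha => t [_ Ht].
    by apply/eqP => x0; rewrite Ht x0 mul0r eqxx in an.
  exists x^-1; split; first by rewrite invr_neq0.
  rewrite prodsetE (H2 Hin) HJx.
  have -> : (fun y => exists z, scale x T z /\ y = x^-1 * z) = scale x^-1 (scale x T) by [].
  by rewrite scaleM mulVf // scale1 => y; split.
Qed.
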